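(* Let $\alpha \in (0,\frac{\pi}{2})$ and $\beta \in [0,\alpha]$. Then for all $\theta \in [1,\frac{\pi}{2\alpha})$, \[\Big| \frac{\sin(2\beta)}{\sin(2\alpha)} - \frac{\sin(2\theta\beta)}{\sin(2\theta\alpha)} \Big| \leq \frac{4(\theta-1)\alpha}{\sin(2\alpha)\sin(2\theta\alpha)}.\] *)

(* Defs.v *)
From Stdlib Require Import Reals.

(* Main.v *)
Require Import Defs.
From Stdlib Require Import Reals Lra.
Open Scope R_scope.

Lemma abs_sin_le (x : R) : Rabs (sin x) <= Rabs x.
Proof.
  destruct (Rtotal_order x 0) as [H|[H|H]].
  - replace (sin x) with (- sin (-x)) by (rewrite sin_neg; ring).
    rewrite Rabs_Ropp, (Rabs_left x) by lra.
    assert (h := sin_lt_x (- x) ltac:(lra)).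
    assert (h2 : 0 < - x) by lra.
    destruct (Rle_dec 0 (sin (-x))).
    + rewrite Rabs_right; lra.
    + rewrite Rabs_left by lra.
      pose proof (SIN_bound (-x)).
      assert (sin (- x) >= - (-x)).
      { destruct (Rle_dec (-x) 1).
        -
          assert (0 < sin (-x)). { apply sin_gt_0; pose proof PI2_1; lra. }
          lra.
        - lra. }
      lra.
  - subst. rewrite sin_0, Rabs_R0. lra.
  - assert (h := sin_lt_x x H).
    rewrite (Rabs_right x) by lra.
    destruct (Rle_dec 0 (sin x)).
    + rewrite Rabs_right; lra.
    + rewrite Rabs_left by lra. pose proof (SIN_bound x).
      destruct (Rle_dec x 1).
      * assert (0 < sin x). { apply sin_gt_0; pose proof PI2_1; lra. } lra.
      * lra.
Qed.

Lemma sin_lip (x y : R) : Rabs (sin x - sin y) <= Rabs (x - y).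
Proof.
  rewrite form4, !Rabs_mult.
  pose proof (abs_sin_le ((x - y) / 2)).
  assert (Rabs ((x - y) / 2) = Rabs (x - y) / 2).
  { unfold Rdiv. rewrite Rabs_mult, (Rabs_right (/2)) by lra. reflexivity. }
  assert (Rabs (cos ((x + y) / 2)) <= 1).
  { pose proof (COS_bound ((x + y) / 2)). apply Rabs_le. lra. }
  rewrite (Rabs_right 2) by lra.
  pose proof (Rabs_pos (cos ((x + y) / 2))).
  pose proof (Rabs_pos (sin ((x - y) / 2))).
  assert (Rabs (cos ((x + y) / 2)) * Rabs (sin ((x - y) / 2)) <= 1 * (Rabs (x - y) / 2)).
  { apply Rmult_le_compat; lra. }
  lra.
Qed.

Theorem propositionB3 (alpha beta theta : R)
  (Ha : 0 < alpha < PI / 2) (Hb : 0 <= beta <= alpha)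
  (Ht : 1 <= theta < PI / (2 * alpha)) :
  Rabs (sin (2 * beta) / sin (2 * alpha)
        - sin (2 * theta * beta) / sin (2 * theta * alpha))
  <= 4 * (theta - 1) * alpha / (sin (2 * alpha) * sin (2 * theta * alpha)).
Proof.
  assert (Hta : 2 * theta * alpha < PI).
  { destruct Ht as [_ Ht]. apply (Rmult_lt_compat_r (2 * alpha)) in Ht; [|lra].
    unfold Rdiv in Ht. rewrite Rmult_assoc, Rinv_l in Ht by lra. lra. }
  assert (s1 : 0 < sin (2 * alpha)) by (apply sin_gt_0; lra).
  assert (s2 : 0 < sin (2 * theta * alpha)) by (apply sin_gt_0; nra).
  set (S1 := sin (2 * alpha)) in *. set (S2 := sin (2 * theta * alpha)) in *.
  set (B := sin (2 * beta)). set (TB := sin (2 * theta * beta)).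
  assert (E : B / S1 - TB / S2 = (B * (S2 - S1) - S1 * (TB - B)) / (S1 * S2))
    by (field; lra).
  rewrite E. unfold Rdiv. rewrite Rabs_mult.
  rewrite (Rabs_right (/ (S1 * S2))) by (apply Rle_ge, Rlt_le, Rinv_0_lt_compat; nra).
  apply Rmult_le_compat_r; [apply Rlt_le, Rinv_0_lt_compat; nra|].
  pose proof (sin_lip (2 * theta * alpha) (2 * alpha)) as L1.
  pose proof (sin_lip (2 * theta * beta) (2 * beta)) as L2.
  fold S1 S2 B TB in L1, L2.
  rewrite (Rabs_right (2 * theta * alpha - 2 * alpha)) in L1 by nra. rewrite (Rabs_right (2 * theta * beta - 2 * beta)) in L2 by nra.
  assert (AB : Rabs B <= 1) by (apply Rabs_le; apply SIN_bound).
  assert (AS : Rabs S1 <= 1) by (apply Rabs_le; apply SIN_bound).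
  eapply Rle_trans; [apply Rabs_triang|]. rewrite Rabs_Ropp, !Rabs_mult.
  pose proof (Rabs_pos B). pose proof (Rabs_pos S1).
  pose proof (Rabs_pos (S2 - S1)). pose proof (Rabs_pos (TB - B)).
  assert (Rabs B * Rabs (S2 - S1) <= 1 * (2 * theta * alpha - 2 * alpha))
    by (apply Rmult_le_compat; lra).
  assert (Rabs S1 * Rabs (TB - B) <= 1 * (2 * theta * beta - 2 * beta))
    by (apply Rmult_le_compat; lra).
  nra.
Qed.
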